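(* Let $N\ge1$, $R>0$, $m>1$ with $N>m$, $p>1$, $\gamma\in(0,m-1)$, $\alpha,\beta\in\mathbb R$ with $N+\alpha-m>0$ and $\beta-\alpha+1>0$. Let $a:[0,\infty)\to(0,\infty)$ be of class $C^1$ with $c_1\le a\le c_2$ for constants $0<c_1\le c_2$, and let $g:[0,\infty)\to[0,\infty)$ be of class $C^1$ and nondecreasing. Let $v\in C^1[0,R]$ be the radial profile of a positive radial solution of $$-\mathrm{div}\Big(\frac{|x|^\alpha|\nabla u|^{m-2}\nabla u}{(a(|x|)+g(u))^\gamma}\Big)=|x|^\beta u^p \ \text{in } B_R\setminus\{0\},\qquad u=0 \text{ on }\partial B_R,$$ and let $\sigma$ be a constant with $-(N+\alpha-m)<\sigma\le m-1$. Then, writing $D(r)=a(r)+g(v(r))$, $$\Big(\sigma-m+2-\frac{N+\alpha-m+1+\sigma}{m}+\frac{N+\beta+1+\sigma-m}{p+1}\Big)\int_0^R\frac{r^{N+\alpha-m+\sigma}|v'(r)|^m}{D(r)^\gamma}dr$$ $$=\frac{m-1}{m}\frac{R^{N+\alpha-m+1+\sigma}|v'(R)|^m}{(a(R)+g(0))^\gamma}-\frac{\gamma}{m}\int_0^R\frac{r^{N+\alpha-m+1+\sigma}|v'(r)|^m a'(r)}{D(r)^{\gamma+1}}dr-\frac{\gamma}{m}\int_0^R\frac{r^{N+\alpha-m+1+\sigma}|v'(r)|^m v'(r)g'(v(r))}{D(r)^{\gamma+1}}dr$$ $$-\frac{N+\beta+1+\sigma-m}{p+1}(\sigma-m+1)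\int_0^R\frac{r^{N+\alpha+\sigma-m-1}|v'(r)|^{m-2}v'(r)v(r)}{D(r)^\gamma}dr.$$
   Context: $B_R$ is the open ball of radius $R$ centered at the origin in $\mathbb R^N$. A positive radial solution is $u(x)=v(|x|)$ with $v>0$ on $[0,R)$, $v\in C^1[0,R)\cap C[0,R]$, $r\mapsto r^{N+\alpha-1}|v'(r)|^{m-2}v'(r)(a(r)+g(v(r)))^{-\gamma}\in C^1(0,R)$, and $$-\Big(\frac{r^{N+\alpha-1}|v'(r)|^{m-2}v'(r)}{(a(r)+g(v(r)))^\gamma}\Big)'=r^{N+\beta-1}v^p(r),\ 0<r<R,\qquad v'(0)=0,\ v(R)=0.$$ *)

(* Defs.v *)
From Stdlib Require Import Reals Lra.
From Coquelicot Require Import Coquelicot.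
Open Scope R_scope.

(* Real power x^y for x >= 0, with the convention 0^y = 0 (used with y > 0,
   or multiplied by 0 as in |t|^(m-2) t at t = 0). *)
Definition powr (x y : R) : R := if Rle_dec x 0 then 0 else Rpower x y.

Definition cont_on (f : R -> R) (a b : R) : Prop :=
  forall x, a <= x <= b ->
    filterlim f (within (fun y => a <= y <= b) (locally x)) (locally (f x)).

Definition cont_nonneg (f : R -> R) : Prop :=
  forall x, 0 <= x ->
    filterlim f (within (fun y => 0 <= y) (locally x)) (locally (f x)).

(* int_0^R0 f = I, as an (improper at 0) Riemann integral:
   f is integrable on every [e,R0], 0<e<=R0, and int_e^R0 f -> I as e -> 0+. *)
Definition int0 (f : R -> R) (R0 I : R) : Prop :=
  (forall e, 0 < e <= R0 -> ex_RInt f e R0) /\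
  filterlim (fun e => RInt f e R0) (at_right 0) (locally I).

Definition flux (N : nat) (alpha m gamma : R) (a g v dv : R -> R) (r : R) : R :=
  powr r (INR N + alpha - 1) * (powr (Rabs (dv r)) (m - 2) * dv r)
  / powr (a r + g (v r)) gamma.

Definition pos_radial_solution (N : nat) (alpha beta m gamma p : R)
    (a g : R -> R) (R0 : R) (v dv : R -> R) : Prop :=
  (forall r, 0 <= r < R0 -> 0 < v r) /\
  cont_on v 0 R0 /\
  (forall r, 0 < r < R0 -> is_derive v r (dv r)) /\
  cont_on dv 0 R0 /\
  (forall r, 0 < r < R0 ->
     is_derive (flux N alpha m gamma a g v dv) r
       (- (powr r (INR N + beta - 1) * powr (v r) p))) /\
  dv 0 = 0 /\ v R0 = 0.

(* Main.v *)
Require Import Defs.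
From Stdlib Require Import Reals Lra FunctionalExtensionality.
From Coquelicot Require Import Coquelicot.
Open Scope R_scope.

Lemma lim_plus {T} {F : (T -> Prop) -> Prop} {FF : Filter F} (f g : T -> R) a b :
  filterlim f F (locally a) -> filterlim g F (locally b) ->
  filterlim (fun x => f x + g x) F (locally (a + b)).
Proof. intros Hf Hg. apply (filterlim_comp_2 f g Rplus Hf Hg). apply (filterlim_plus a b). Qed.

Lemma lim_mult {T} {F : (T -> Prop) -> Prop} {FF : Filter F} (f g : T -> R) a b :
  filterlim f F (locally a) -> filterlim g F (locally b) ->
  filterlim (fun x => f x * g x) F (locally (a * b)).
Proof. intros Hf Hg. apply (filterlim_comp_2 f g Rmult Hf Hg). apply (@filterlim_mult R_AbsRing a b). Qed.

Lemma lim_cont {T} {F : (T -> Prop) -> Prop} {FF : Filter F} (f : T -> R) (h : R -> R) a :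
  continuous h a -> filterlim f F (locally a) ->
  filterlim (fun x => h (f x)) F (locally (h a)).
Proof. intros Hh Hf. eapply filterlim_comp; eauto. Qed.

Lemma cont_inv b : b <> 0 -> continuous (fun y => / y) b.
Proof.
  intros Hb. apply (@ex_derive_continuous R_AbsRing R_NormedModule). exists (- 1 / b ^ 2).
  apply (is_derive_inv (fun y : R => y) b 1); [apply (is_derive_id (K:=R_AbsRing))|exact Hb].
Qed.

Lemma lim_inv {T} {F : (T -> Prop) -> Prop} {FF : Filter F} (f : T -> R) b :
  b <> 0 -> filterlim f F (locally b) -> filterlim (fun x => / f x) F (locally (/ b)).
Proof. intros Hb Hf. apply (lim_cont f (fun y => / y)); auto using cont_inv. Qed.

Lemma lim_div {T} {F : (T -> Prop) -> Prop} {FF : Filter F} (f g : T -> R) a b :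
  b <> 0 -> filterlim f F (locally a) -> filterlim g F (locally b) ->
  filterlim (fun x => f x / g x) F (locally (a / b)).
Proof. intros Hb Hf Hg. apply lim_mult; auto. apply lim_inv; auto. Qed.

Lemma lim_const {T} {F : (T -> Prop) -> Prop} {FF : Filter F} (c : R) :
  filterlim (fun _ : T => c) F (locally c).
Proof. apply filterlim_const. Qed.

Lemma lim_opp {T} {F : (T -> Prop) -> Prop} {FF : Filter F} (f : T -> R) a :
  filterlim f F (locally a) -> filterlim (fun x => - f x) F (locally (- a)).
Proof.
  intros Hf. replace (fun x => - f x) with (fun x => (-1) * f x) by (apply functional_extensionality; intros; ring).
  replace (-a) with ((-1) * a) by ring. apply lim_mult; auto. apply lim_const.
Qed.

Lemma powr_pos x c : 0 < x -> powr x c = Rpower x c.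
Proof. intros H. unfold powr. destruct (Rle_dec x 0); [lra|reflexivity]. Qed.
Lemma powr_le0 x c : x <= 0 -> powr x c = 0.
Proof. intros H. unfold powr. destruct (Rle_dec x 0); [reflexivity|lra]. Qed.
Lemma powr_nonneg x c : 0 <= powr x c.
Proof. unfold powr. destruct (Rle_dec x 0). lra. left. apply exp_pos. Qed.
Lemma Rpower_pos x c : 0 < Rpower x c.
Proof. apply exp_pos. Qed.

Lemma d_rpow_id x c : 0 < x -> is_derive (fun t => Rpower t c) x (c * Rpower x c / x).
Proof.
  intros Hx. apply is_derive_Reals.
  replace (c * Rpower x c / x) with (c * Rpower x (c - 1)).
  apply derivable_pt_lim_power; auto.
  unfold Rminus. rewrite Rpower_plus, Rpower_Ropp, Rpower_1; auto. field. lra.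
Qed.

Lemma is_derive_eq (f : R -> R) (x l l' : R) : is_derive f x l -> l = l' -> is_derive f x l'.
Proof. intros H ->. exact H. Qed.

Lemma d_rpow (u : R -> R) x du c : 0 < u x -> is_derive u x du ->
  is_derive (fun t => Rpower (u t) c) x (c * Rpower (u x) c / u x * du).
Proof.
  intros Hu Hd. pose proof (is_derive_comp (fun t => Rpower t c) u x _ _ (d_rpow_id (u x) c Hu) Hd) as H.
  eapply is_derive_eq. exact H. unfold scal; simpl; unfold mult; simpl. ring.
Qed.

Lemma d_plus (f g : R -> R) x df dg : is_derive f x df -> is_derive g x dg ->
  is_derive (fun t => f t + g t) x (df + dg).
Proof. intros H1 H2. exact (is_derive_plus f g x df dg H1 H2). Qed.

Lemma d_mult (f g : R -> R) x df dg : is_derive f x df -> is_derive g x dg ->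
  is_derive (fun t => f t * g t) x (df * g x + f x * dg).
Proof. intros H1 H2. apply (is_derive_mult f g x df dg H1 H2). intros; apply Rmult_comm. Qed.

Lemma d_inv (f : R -> R) x df : is_derive f x df -> f x <> 0 ->
  is_derive (fun t => / f t) x (- df / (f x * f x)).
Proof. intros H1 H2. eapply is_derive_eq. apply (is_derive_inv f x df H1 H2). simpl. field. auto. Qed.

Lemma d_div (f g : R -> R) x df dg : is_derive f x df -> is_derive g x dg -> g x <> 0 ->
  is_derive (fun t => f t / g t) x (df / g x - f x * dg / (g x * g x)).
Proof. intros H1 H2 H3. eapply is_derive_eq. apply d_mult. exact H1. apply d_inv. exact H2. exact H3. cbv beta. field. auto. Qed.

Lemma d_const x c : is_derive (fun _ : R => c) x 0.
Proof. exact (is_derive_const (K:=R_AbsRing) c x). Qed.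

Lemma d_id x : is_derive (fun t : R => t) x 1.
Proof. apply (is_derive_id (K:=R_AbsRing)). Qed.

Lemma d_opp (f : R -> R) x df : is_derive f x df -> is_derive (fun t => - f t) x (- df).
Proof. intros H. apply (is_derive_opp f x df H). Qed.

Lemma d_scal (f : R -> R) x df c : is_derive f x df -> is_derive (fun t => c * f t) x (c * df).
Proof. intros H. eapply is_derive_eq. apply d_mult. apply d_const. exact H. cbv beta. ring. Qed.

Lemma cont_rpow x c : 0 < x -> continuous (fun t => Rpower t c) x.
Proof. intros Hx. apply (@ex_derive_continuous R_AbsRing R_NormedModule). eexists. apply d_rpow_id; auto. Qed.

Lemma ballR (x e y : R) : ball x e y <-> Rabs (y - x) < e.
Proof. split; intros H; exact H. Qed.

Lemma loc_intro (x : R) (P : R -> Prop) d : 0 < d -> (forall y, Rabs (y - x) < d -> P y) -> locally x P.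
Proof. intros Hd H. exists (mkposreal d Hd). intros y Hy. apply H. apply ballR in Hy. exact Hy. Qed.

Lemma small_rpow c eps : 0 < c -> 0 < eps -> exists d, 0 < d /\ forall t, 0 < t < d -> Rpower t c < eps.
Proof.
  intros Hc He. exists (Rpower eps (/ c)). split. apply Rpower_pos.
  intros t Ht. replace eps with (Rpower (Rpower eps (/ c)) c).
  apply Rlt_Rpower_l; auto. rewrite Rpower_mult. replace (/ c * c) with 1 by (field; lra).
  apply Rpower_1; auto.
Qed.

Lemma cont_powr_abs c y0 : 0 < c -> continuous (fun y => powr (Rabs y) c) y0.
Proof.
  intros Hc. destruct (Req_dec y0 0) as [->|Hy0].
  - apply filterlim_locally. intros eps. destruct (small_rpow c eps Hc (cond_pos eps)) as [d [Hd Hd']].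
    apply (loc_intro 0 _ d Hd). intros y Hy. apply ballR. rewrite Rabs_R0, (powr_le0 0) by lra.
    rewrite Rminus_0_r in Hy. rewrite Rminus_0_r.
    destruct (Req_dec y 0) as [->|Hy0]. rewrite Rabs_R0, powr_le0 by lra. rewrite Rabs_R0. apply cond_pos.
    assert (0 < Rabs y) by (apply Rabs_pos_lt; auto).
    rewrite powr_pos by auto. rewrite Rabs_pos_eq by (left; apply Rpower_pos). apply Hd'. lra.
  - assert (Ha : 0 < Rabs y0) by (apply Rabs_pos_lt; auto).
    eapply filterlim_ext_loc.
    2:{ rewrite (powr_pos _ _ Ha). apply (continuous_comp Rabs (fun t => Rpower t c)). apply continuous_Rabs. apply cont_rpow; auto. }
    apply (loc_intro y0 _ (Rabs y0) Ha). intros y Hy. simpl. rewrite powr_pos; auto.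
    assert (Rabs y0 - Rabs y <= Rabs (y - y0)). { replace y0 with ((y0 - y) + y) at 1 by ring.
      pose proof (Rabs_triang (y0 - y) y). rewrite Rabs_minus_sym in H. lra. }
    lra.
Qed.

Lemma cont_powr_pos c x0 : 0 < x0 -> continuous (fun y => powr y c) x0.
Proof.
  intros Hx. eapply filterlim_ext_loc.
  2:{ rewrite (powr_pos _ _ Hx). apply cont_rpow; auto. }
  apply (loc_intro x0 _ x0 Hx). intros y Hy. simpl. rewrite powr_pos; auto.
  apply Rabs_def2 in Hy. lra.
Qed.

Lemma phi_abs m y : powr (Rabs y) (m - 2) * Rabs y = powr (Rabs y) (m - 1).
Proof.
  destruct (Req_dec y 0) as [->|Hy]. rewrite Rabs_R0, !powr_le0 by lra. ring.
  assert (0 < Rabs y) by (apply Rabs_pos_lt; auto). rewrite !powr_pos by auto.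
  replace (m - 1) with ((m - 2) + 1) by ring. rewrite Rpower_plus, Rpower_1; auto.
Qed.

Lemma cont_phi m y0 : 1 < m -> continuous (fun y => powr (Rabs y) (m - 2) * y) y0.
Proof.
  intros Hm. destruct (Req_dec y0 0) as [->|Hy0].
  - apply filterlim_locally. intros eps.
    pose proof (cont_powr_abs (m - 1) 0 ltac:(lra)) as Hc. apply filterlim_locally with (eps := eps) in Hc.
    eapply filter_imp. 2: exact Hc. intros y Hy. apply ballR. pose proof (proj1 (ballR _ _ _) Hy) as Hy'. clear Hy. rename Hy' into Hy.
    rewrite Rabs_R0, (powr_le0 0) in Hy |- * by lra. rewrite Rmult_0_r. rewrite Rminus_0_r in Hy |- *.
    rewrite Rabs_mult, (Rabs_pos_eq (powr _ _)) by apply powr_nonneg. rewrite phi_abs.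
    rewrite Rabs_pos_eq in Hy by apply powr_nonneg. exact Hy.
  - apply (lim_mult (fun y => powr (Rabs y) (m - 2)) (fun y => y)). 2: apply continuous_id.
    apply (continuous_comp Rabs (fun t => powr t (m - 2))). apply continuous_Rabs.
    apply cont_powr_pos. apply Rabs_pos_lt; auto.
Qed.

Definition clamp (a b y : R) := Rmax a (Rmin b y).

Lemma clamp_in a b y : a <= b -> a <= clamp a b y <= b.
Proof. intros H. unfold clamp, Rmax, Rmin. repeat destruct Rle_dec; lra. Qed.

Lemma clamp_id a b y : a <= y <= b -> clamp a b y = y.
Proof. intros H. unfold clamp, Rmax, Rmin. repeat destruct Rle_dec; lra. Qed.

Lemma clamp_lip a b x y : a <= b -> Rabs (clamp a b y - clamp a b x) <= Rabs (y - x).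
Proof. intros H. unfold clamp, Rmax, Rmin. repeat destruct Rle_dec; unfold Rabs; repeat destruct Rcase_abs; lra. Qed.

Lemma clamp_cont f a b x : a <= b -> cont_on f a b -> continuous (fun y => f (clamp a b y)) x.
Proof.
  intros Hab Hf. unfold continuous.
  apply (filterlim_comp _ _ _ (clamp a b) f _ (within (fun y => a <= y <= b) (locally (clamp a b x)))).
  - intros P [eps HP]. exists eps. intros y Hy. apply HP.
    apply ballR. apply (proj1 (ballR _ _ _)) in Hy. pose proof (clamp_lip a b x y Hab). lra.
    apply clamp_in; auto.
  - apply Hf. apply clamp_in; auto.
Qed.

Lemma cont_on_exRInt f a b a' b' : a <= a' -> a' <= b' -> b' <= b -> cont_on f a b -> ex_RInt f a' b'.
Proof.
  intros H1 H2 H3 Hf. apply (ex_RInt_ext (fun y => f (clamp a b y))).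
  - intros x Hx. rewrite Rmin_left in Hx by lra. rewrite Rmax_right in Hx by lra. rewrite clamp_id; auto. lra.
  - apply (@ex_RInt_continuous R_CompleteNormedModule). intros z _. apply clamp_cont; auto. lra.
Qed.

Lemma cont_on_bound f a b : a <= b -> cont_on f a b -> exists M, forall x, a <= x <= b -> Rabs (f x) <= M.
Proof.
  intros Hab Hf. destruct (continuity_ab_maj (fun y => Rabs (f (clamp a b y))) a b Hab) as [Mx [HM _]].
  - intros c _. apply continuity_pt_filterlim. apply (continuous_Rabs_comp (fun y => f (clamp a b y))).
    apply clamp_cont; auto.
  - exists (Rabs (f (clamp a b Mx))). intros x Hx. specialize (HM x Hx). simpl in HM. rewrite clamp_id in HM; auto.
Qed.

Lemma cont_within (f : R -> R) (x : R) (S : R -> Prop) : continuous f x -> filterlim f (within S (locally x)) (locally (f x)).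
Proof. intros H. eapply filterlim_filter_le_1. apply filter_le_within. exact H. Qed.

Lemma lim_within_comp {T} {F : (T -> Prop) -> Prop} {FF : Filter F} (f : T -> R) (h : R -> R) (S : R -> Prop) y :
  filterlim h (within S (locally y)) (locally (h y)) -> filterlim f F (locally y) -> F (fun x => S (f x)) ->
  filterlim (fun x => h (f x)) F (locally (h y)).
Proof.
  intros Hh Hf HS. eapply filterlim_comp. 2: exact Hh.
  intros P HP. unfold within in HP. apply Hf in HP. eapply filter_imp. 2: apply filter_and; [exact HP|exact HS].
  intros x [H1 H2]. apply H1. exact H2.
Qed.

Lemma zero_of_small (D : R) : (forall eps, 0 < eps -> Rabs D <= eps) -> D = 0.
Proof.
  intros H. destruct (Req_dec D 0) as [|HD]; auto. assert (0 < Rabs D) by (apply Rabs_pos_lt; auto).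
  specialize (H (Rabs D / 2) ltac:(lra)). lra.
Qed.

Lemma RInt_deriv_closed (G h : R -> R) a b : a <= b ->
  (forall x, a <= x <= b -> is_derive G x (h x)) -> (forall x, a <= x <= b -> continuous h x) ->
  RInt h a b = G b - G a.
Proof.
  intros Hab Hd Hc. apply is_RInt_unique.
  apply (is_RInt_derive G h a b).
  - intros x Hx. rewrite Rmin_left, Rmax_right in Hx by lra. auto.
  - intros x Hx. rewrite Rmin_left, Rmax_right in Hx by lra. auto.
Qed.

Lemma FTC_right (G h : R -> R) e b Gb M : e < b ->
  (forall x, e <= x < b -> is_derive G x (h x)) -> (forall x, e <= x < b -> continuous h x) ->
  ex_RInt h e b -> (forall x, e <= x <= b -> Rabs (h x) <= M) ->
  filterlim G (at_left b) (locally Gb) -> RInt h e b = Gb - G e.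
Proof.
  intros Heb Hd Hc Hex HM HG.
  assert (HM0 : 0 <= M) by (specialize (HM e ltac:(lra)); pose proof (Rabs_pos (h e)); lra).
  apply Rminus_diag_uniq. apply zero_of_small. intros eps Heps.
  assert (HG' := proj1 (filterlim_locally G Gb) HG (mkposreal (eps/2) ltac:(lra))).
  destruct HG' as [d1 Hd1].
  set (t := Rmin (d1/2) (Rmin ((b - e)/2) (eps / (2 * (M + 1))))).
  assert (Ht0 : 0 < t). { unfold t. pose proof (cond_pos d1). repeat apply Rmin_glb_lt; try lra.
    apply Rdiv_lt_0_compat; lra. }
  assert (Ht1 : t <= d1/2) by apply Rmin_l.
  assert (Ht2 : t <= (b - e)/2) by (eapply Rle_trans; [apply Rmin_r|apply Rmin_l]).
  assert (Ht3 : t <= eps / (2 * (M + 1))) by (eapply Rle_trans; [apply Rmin_r|apply Rmin_r]).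
  set (b' := b - t).
  assert (E1 : RInt h e b' = G b' - G e).
  { apply RInt_deriv_closed. unfold b'; lra. intros; apply Hd; unfold b' in *; lra.
    intros; apply Hc; unfold b' in *; lra. }
  assert (Ex1 : ex_RInt h e b') by (apply (ex_RInt_Chasles_1 h e b' b); auto; unfold b'; lra).
  assert (Ex2 : ex_RInt h b' b) by (apply (ex_RInt_Chasles_2 h e b' b); auto; unfold b'; lra).
  assert (E2 := RInt_Chasles h e b' b Ex1 Ex2). simpl in E2. unfold plus in E2; simpl in E2.
  assert (E3 : Rabs (RInt h b' b) <= (b - b') * M).
  { apply abs_RInt_le_const; auto. unfold b'; lra. intros; apply HM; unfold b' in *; lra. }
  assert (E4 : Rabs (G b' - Gb) < eps / 2).
  { specialize (Hd1 b'). simpl in Hd1. apply (proj1 (ballR _ _ _)). apply Hd1.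
    apply ballR. unfold b'. replace (b - t - b) with (- t) by ring. rewrite Rabs_Ropp, Rabs_pos_eq; lra.
    unfold b'; lra. }
  assert (E5 : (b - b') * M <= eps / 2).
  { unfold b'. replace (b - (b - t)) with t by ring.
    apply Rle_trans with (eps / (2 * (M + 1)) * M). apply Rmult_le_compat_r; auto.
    apply Rmult_le_reg_r with (2 * (M + 1)). lra. field_simplify; try lra. }
  rewrite <- E2, E1.
  replace (G b' - G e + RInt h b' b - (Gb - G e)) with ((G b' - Gb) + RInt h b' b) by ring.
  eapply Rle_trans. apply Rabs_triang. lra.
Qed.

Lemma RInt_pow_bound C c u v : 0 < u -> u <= v -> -1 < c ->
  ex_RInt (fun r => C * Rpower r c) u v /\
  RInt (fun r => C * Rpower r c) u v = C / (c + 1) * Rpower v (c + 1) - C / (c + 1) * Rpower u (c + 1).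
Proof.
  intros Hu Huv Hc.
  assert (Hd : forall x, u <= x <= v -> is_derive (fun r => C / (c + 1) * Rpower r (c + 1)) x (C * Rpower x c)).
  { intros x Hx. eapply is_derive_eq. apply d_scal. apply d_rpow_id. lra.
    rewrite Rpower_plus, Rpower_1 by lra. field. split; lra. }
  assert (Hct : forall x, u <= x <= v -> continuous (fun r => C * Rpower r c) x).
  { intros x Hx. apply (lim_mult (fun _ => C) (fun r => Rpower r c)). apply filterlim_const. apply cont_rpow. lra. }
  split.
  - apply (@ex_RInt_continuous R_CompleteNormedModule). intros z Hz. rewrite Rmin_left, Rmax_right in Hz by lra. auto.
  - apply (RInt_deriv_closed (fun r => C / (c + 1) * Rpower r (c + 1))); auto.
Qed.

Lemma improper (f : R -> R) R0 c C : 0 < R0 -> -1 < c -> 0 <= C ->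
  (forall e, 0 < e <= R0 -> ex_RInt f e R0) ->
  (forall r, 0 < r < R0 -> Rabs (f r) <= C * Rpower r c) -> exists I, int0 f R0 I.
Proof.
  intros HR Hc HC Hex Hb.
  assert (Key : forall eps, 0 < eps -> exists d, 0 < d <= R0 /\ forall u v, 0 < u <= v -> v < d ->
            Rabs (RInt f v R0 - RInt f u R0) < eps).
  { intros eps Heps.
    destruct (small_rpow (c + 1) (eps * (c + 1) / (C + 1)) ltac:(lra)) as [d0 [Hd0 Hd0']].
    { apply Rdiv_lt_0_compat; [apply Rmult_lt_0_compat|]; lra. }
    exists (Rmin d0 R0). split. split. apply Rmin_glb_lt; lra. apply Rmin_r.
    intros u v Huv Hv. assert (Hvd0 : v < d0) by (eapply Rlt_le_trans; [exact Hv|apply Rmin_l]).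
    assert (HvR : v < R0) by (eapply Rlt_le_trans; [exact Hv|apply Rmin_r]).
    assert (Ex1 : ex_RInt f u v) by (apply (ex_RInt_Chasles_1 f u v R0); [lra|apply Hex; lra]).
    assert (Ex2 : ex_RInt f v R0) by (apply Hex; lra).
    assert (E := RInt_Chasles f u v R0 Ex1 Ex2). simpl in E. unfold plus in E; simpl in E.
    destruct (RInt_pow_bound C c u v ltac:(lra) ltac:(lra) Hc) as [Exg Eg].
    assert (L1 : RInt f u v <= RInt (fun r => C * Rpower r c) u v).
    { apply RInt_le; auto. lra. intros x Hx. specialize (Hb x ltac:(lra)). apply Rabs_le_between in Hb. lra. }
    assert (L2 : RInt (fun r => opp (f r)) u v <= RInt (fun r => C * Rpower r c) u v).
    { apply RInt_le; auto. lra. apply (ex_RInt_opp (V:=R_NormedModule)); auto. intros x Hx. specialize (Hb x ltac:(lra)).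
      apply Rabs_le_between in Hb. unfold opp; simpl. lra. }
    rewrite (RInt_opp (V:=R_CompleteNormedModule)) in L2 by auto. unfold opp in L2; simpl in L2.
    assert (L3 : C / (c + 1) * Rpower v (c + 1) < eps).
    { specialize (Hd0' v ltac:(lra)).
      apply Rle_lt_trans with ((C + 1) / (c + 1) * Rpower v (c + 1)).
      apply Rmult_le_compat_r. left; apply Rpower_pos. apply Rmult_le_compat_r. left; apply Rinv_0_lt_compat; lra. lra.
      apply Rmult_lt_reg_r with ((c + 1) / (C + 1)). apply Rdiv_lt_0_compat; lra.
      replace ((C + 1) / (c + 1) * Rpower v (c + 1) * ((c + 1) / (C + 1))) with (Rpower v (c + 1)) by (field; lra).
      replace (eps * ((c + 1) / (C + 1))) with (eps * (c + 1) / (C + 1)) by (field; lra). lra. }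
    assert (L4 : 0 <= C / (c + 1) * Rpower u (c + 1)).
    { apply Rmult_le_pos. apply Rdiv_le_0_compat; lra. left; apply Rpower_pos. }
    rewrite <- E. replace (RInt f v R0 - (RInt f u v + RInt f v R0)) with (- RInt f u v) by ring.
    rewrite Rabs_Ropp. apply Rabs_def1; lra. }
  assert (HCa : exists I, filterlim (fun e => RInt f e R0) (at_right 0) (locally I)).
  2:{ destruct HCa as [I HI]. exists I. split; auto. }
  apply (filterlim_locally_cauchy (F := at_right 0)).
  intros eps. destruct (Key eps (cond_pos eps)) as [d [Hd Hd']].
  exists (fun u => 0 < u < d). split.
  - exists (mkposreal d ltac:(lra)). intros y Hy Hy0. apply (proj1 (ballR _ _ _)) in Hy. simpl in Hy.
    rewrite Rminus_0_r in Hy. apply Rabs_def2 in Hy. lra.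
  - intros u v Hu Hv. apply ballR. destruct (Rle_dec u v).
    + apply Hd'; lra.
    + rewrite Rabs_minus_sym. apply Hd'; lra.
Qed.

Lemma powr_mono x y c : 0 <= x <= y -> 0 <= c -> powr x c <= powr y c.
Proof.
  intros Hxy Hc. destruct (Req_dec x 0) as [->|Hx]. rewrite powr_le0 by lra. apply powr_nonneg.
  rewrite !powr_pos by lra. apply Rle_Rpower_l; lra.
Qed.

Lemma powr_max y c : powr y c = powr (Rabs ((y + Rabs y) / 2)) c.
Proof.
  destruct (Rle_dec y 0) as [Hy|Hy].
  - rewrite (Rabs_left1 y Hy). replace ((y + - y) / 2) with 0 by lra.
    rewrite Rabs_R0, (powr_le0 0), powr_le0; lra.
  - rewrite (Rabs_right y) by lra. replace ((y + y) / 2) with y by lra. rewrite Rabs_right by lra. reflexivity.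
Qed.

Lemma cont_powr c y0 : 0 < c -> continuous (fun y => powr y c) y0.
Proof.
  intros Hc. eapply filterlim_ext. intros y. symmetry. apply powr_max. rewrite (powr_max y0).
  apply (continuous_comp (fun y => (y + Rabs y) / 2) (fun z => powr (Rabs z) c)).
  2: apply cont_powr_abs; auto.
  apply (lim_mult (fun y => y + Rabs y) (fun _ => / 2)). apply lim_plus. apply continuous_id. apply continuous_Rabs.
  apply filterlim_const.
Qed.

Lemma decr_lt (F dF : R -> R) t r : t < r -> (forall x, t <= x <= r -> is_derive F x (dF x)) ->
  (forall x, t <= x <= r -> dF x < 0) -> F r < F t.
Proof.
  intros Htr Hd Hn. destruct (MVT_gen F t r dF) as [c [Hc E]].
  - intros x Hx. rewrite Rmin_left, Rmax_right in Hx by lra. apply Hd; lra.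
  - intros x Hx. rewrite Rmin_left, Rmax_right in Hx by lra. apply continuity_pt_filterlim.
    apply (@ex_derive_continuous R_AbsRing R_NormedModule). eexists. apply Hd; lra.
  - rewrite Rmin_left, Rmax_right in Hc by lra. specialize (Hn c Hc). nra.
Qed.

Lemma incr_le (F dF : R -> R) t r : t <= r -> (forall x, t <= x <= r -> is_derive F x (dF x)) ->
  (forall x, t <= x <= r -> 0 <= dF x) -> F t <= F r.
Proof.
  intros Htr Hd Hn. destruct (Req_dec t r) as [->|Hne]. lra.
  destruct (MVT_gen F t r dF) as [c [Hc E]].
  - intros x Hx. rewrite Rmin_left, Rmax_right in Hx by lra. apply Hd; lra.
  - intros x Hx. rewrite Rmin_left, Rmax_right in Hx by lra. apply continuity_pt_filterlim.
    apply (@ex_derive_continuous R_AbsRing R_NormedModule). eexists. apply Hd; lra.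
  - rewrite Rmin_left, Rmax_right in Hc by lra. specialize (Hn c Hc). nra.
Qed.

Lemma neg_of_decr (F dF : R -> R) R0 K1 k : 0 < k -> 0 <= K1 ->
  (forall r, 0 < r < R0 -> is_derive F r (dF r)) -> (forall r, 0 < r < R0 -> dF r < 0) ->
  (forall r, 0 < r < R0 -> Rabs (F r) <= K1 * Rpower r k) -> forall r, 0 < r < R0 -> F r < 0.
Proof.
  intros Hk HK Hd Hn Hb.
  assert (Hle : forall r, 0 < r < R0 -> F r <= 0).
  { intros r Hr. destruct (Rle_dec (F r) 0) as [|Hpos]; auto. exfalso.
    destruct (small_rpow k (F r / (K1 + 1)) Hk) as [d [Hd0 Hd']]. apply Rdiv_lt_0_compat; lra.
    set (t := Rmin (d / 2) (r / 2)).
    assert (Ht : 0 < t < r) by (unfold t; split; [apply Rmin_glb_lt; lra| eapply Rle_lt_trans; [apply Rmin_r|lra]]).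
    assert (Htd : t < d) by (unfold t; eapply Rle_lt_trans; [apply Rmin_l|lra]).
    assert (H1 : F r < F t). { apply (decr_lt F dF); try lra; intros; [apply Hd|apply Hn]; lra. }
    specialize (Hb t ltac:(lra)). apply Rabs_le_between in Hb.
    specialize (Hd' t ltac:(lra)).
    assert (K1 * Rpower t k <= (K1 + 1) * Rpower t k) by (pose proof (Rpower_pos t k); nra).
    assert ((K1 + 1) * Rpower t k < F r).
    { apply Rmult_lt_reg_r with (/ (K1 + 1)). apply Rinv_0_lt_compat; lra.
      replace ((K1 + 1) * Rpower t k * / (K1 + 1)) with (Rpower t k) by (field; lra). exact Hd'. }
    lra. }
  intros r Hr. apply Rlt_le_trans with (F (r / 2)). apply (decr_lt F dF); try lra; intros; [apply Hd|apply Hn]; lra.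
  apply Hle; lra.
Qed.

Lemma nonneg_of_incr (G dG : R -> R) R0 K1 k : 0 < k -> 0 <= K1 ->
  (forall r, 0 < r < R0 -> is_derive G r (dG r)) -> (forall r, 0 < r < R0 -> 0 <= dG r) ->
  (forall r, 0 < r < R0 -> - (K1 * Rpower r k) <= G r) -> forall r, 0 < r < R0 -> 0 <= G r.
Proof.
  intros Hk HK Hd Hn Hb r Hr. destruct (Rle_dec 0 (G r)) as [|Hneg]; auto. exfalso.
  destruct (small_rpow k (- G r / (K1 + 1)) Hk) as [d [Hd0 Hd']]. apply Rdiv_lt_0_compat; lra.
  set (t := Rmin (d / 2) (r / 2)).
  assert (Ht : 0 < t < r) by (unfold t; split; [apply Rmin_glb_lt; lra| eapply Rle_lt_trans; [apply Rmin_r|lra]]).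
  assert (Htd : t < d) by (unfold t; eapply Rle_lt_trans; [apply Rmin_l|lra]).
  assert (H1 : G t <= G r). { apply (incr_le G dG); try lra; intros; [apply Hd|apply Hn]; lra. }
  specialize (Hb t ltac:(lra)). specialize (Hd' t ltac:(lra)).
  assert (K1 * Rpower t k <= (K1 + 1) * Rpower t k) by (pose proof (Rpower_pos t k); nra).
  assert ((K1 + 1) * Rpower t k < - G r).
  { apply Rmult_lt_reg_r with (/ (K1 + 1)). apply Rinv_0_lt_compat; lra.
    replace ((K1 + 1) * Rpower t k * / (K1 + 1)) with (Rpower t k) by (field; lra). exact Hd'. }
  lra.
Qed.

Definition IN (a b : R) := fun y => a <= y <= b.

Lemma within_interior (f : R -> R) a b x l : a < x < b ->
  filterlim f (within (IN a b) (locally x)) (locally l) -> filterlim f (locally x) (locally l).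
Proof.
  intros Hx H P HP. specialize (H P HP). destruct H as [eps He].
  apply (loc_intro x _ (Rmin eps (Rmin (x - a) (b - x)))).
  { apply Rmin_glb_lt. apply cond_pos. apply Rmin_glb_lt; lra. }
  intros y Hy. apply He. apply ballR. eapply Rlt_le_trans. exact Hy. apply Rmin_l.
  assert (Rabs (y - x) < Rmin (x - a) (b - x)) by (eapply Rlt_le_trans; [exact Hy|apply Rmin_r]).
  apply Rabs_def2 in H. pose proof (Rmin_l (x - a) (b - x)). pose proof (Rmin_r (x - a) (b - x)). unfold IN. lra.
Qed.

Lemma within_sub (f : R -> R) a b a' b' x l : a <= a' -> b' <= b ->
  filterlim f (within (IN a b) (locally x)) (locally l) -> filterlim f (within (fun y => a' <= y <= b') (locally x)) (locally l).
Proof.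
  intros H1 H2 H P HP. specialize (H P HP). unfold filtermap, within in *. eapply filter_imp. 2: exact H.
  intros y Hy Hy'. apply Hy. unfold IN. lra.
Qed.

Lemma at_left_of_within (f : R -> R) a b l : a < b ->
  filterlim f (within (IN a b) (locally b)) (locally l) -> filterlim f (at_left b) (locally l).
Proof.
  intros Hab H P HP. specialize (H P HP). destruct H as [eps He].
  exists (mkposreal (Rmin eps (b - a)) ltac:(apply Rmin_glb_lt; [apply cond_pos|lra])).
  intros y Hy Hyb. apply He. apply ballR. apply (proj1 (ballR _ _ _)) in Hy. simpl in Hy.
  eapply Rlt_le_trans. exact Hy. apply Rmin_l.
  apply (proj1 (ballR _ _ _)) in Hy. simpl in Hy.
  assert (Rabs (y - b) < b - a) by (eapply Rlt_le_trans; [exact Hy|apply Rmin_r]).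
  apply Rabs_def2 in H. unfold IN. lra.
Qed.

Lemma int0_of_cont f R0 : 0 < R0 -> cont_on f 0 R0 -> int0 f R0 (RInt f 0 R0).
Proof.
  intros HR Hc. split.
  - intros e He. apply (cont_on_exRInt f 0 R0); lra || auto.
  - destruct (cont_on_bound f 0 R0 ltac:(lra) Hc) as [M HM].
    apply filterlim_locally. intros eps.
    exists (mkposreal (Rmin R0 (eps / (Rabs M + 1))) ltac:(apply Rmin_glb_lt; [lra|apply Rdiv_lt_0_compat; [apply cond_pos| pose proof (Rabs_pos M); lra]])).
    intros e He He0. apply (proj1 (ballR _ _ _)) in He. simpl in He. rewrite Rminus_0_r in He.
    rewrite Rabs_right in He by lra.
    assert (He1 : e < R0) by (eapply Rlt_le_trans; [exact He|apply Rmin_l]).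
    assert (He2 : e < eps / (Rabs M + 1)) by (eapply Rlt_le_trans; [exact He|apply Rmin_r]).
    apply ballR.
    assert (Ex1 : ex_RInt f 0 e) by (apply (cont_on_exRInt f 0 R0); lra || auto).
    assert (Ex2 : ex_RInt f e R0) by (apply (cont_on_exRInt f 0 R0); lra || auto).
    rewrite <- (RInt_Chasles f 0 e R0 Ex1 Ex2). simpl. unfold plus; simpl.
    replace (RInt f e R0 - (RInt f 0 e + RInt f e R0)) with (- RInt f 0 e) by ring. rewrite Rabs_Ropp.
    eapply Rle_lt_trans. apply (abs_RInt_le_const f 0 e (Rabs M)); auto. lra.
    intros t Ht. eapply Rle_trans. apply HM. lra. apply Rle_abs.
    pose proof (Rabs_pos M).
    apply Rle_lt_trans with (e * (Rabs M + 1)). rewrite Rminus_0_r. nra.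
    apply Rmult_lt_reg_r with (/ (Rabs M + 1)). apply Rinv_0_lt_compat; lra.
    rewrite Rmult_assoc, Rinv_r, Rmult_1_r by lra. exact He2.
Qed.

Lemma lim_zero_of_bound (Q : R -> R) R0 A B c1 c2 : 0 < R0 -> 0 < c1 -> 0 < c2 -> 0 <= A -> 0 <= B ->
  (forall e, 0 < e < R0 -> Rabs (Q e) <= A * Rpower e c1 + B * Rpower e c2) ->
  filterlim Q (at_right 0) (locally 0).
Proof.
  intros HR Hc1 Hc2 HA HB Hb. apply filterlim_locally. intros eps.
  destruct (small_rpow c1 (eps / 2 / (A + 1)) Hc1) as [d1 [Hd1 Hd1']]. apply Rdiv_lt_0_compat; [pose proof (cond_pos eps)|]; lra.
  destruct (small_rpow c2 (eps / 2 / (B + 1)) Hc2) as [d2 [Hd2 Hd2']]. apply Rdiv_lt_0_compat; [pose proof (cond_pos eps)|]; lra.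
  exists (mkposreal (Rmin R0 (Rmin d1 d2)) ltac:(repeat apply Rmin_glb_lt; lra)).
  intros e He He0. apply (proj1 (ballR _ _ _)) in He. simpl in He. rewrite Rminus_0_r in He.
  rewrite Rabs_right in He by lra.
  assert (e < R0) by (eapply Rlt_le_trans; [exact He|apply Rmin_l]).
  assert (e < Rmin d1 d2) by (eapply Rlt_le_trans; [exact He|apply Rmin_r]).
  assert (e < d1) by (eapply Rlt_le_trans; [exact H0|apply Rmin_l]).
  assert (e < d2) by (eapply Rlt_le_trans; [exact H0|apply Rmin_r]).
  apply ballR. rewrite Rminus_0_r. eapply Rle_lt_trans. apply Hb; lra.
  specialize (Hd1' e ltac:(lra)). specialize (Hd2' e ltac:(lra)).
  pose proof (Rpower_pos e c1). pose proof (Rpower_pos e c2).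
  assert (A * Rpower e c1 <= eps / 2).
  { apply Rle_trans with ((A + 1) * Rpower e c1). nra.
    apply Rmult_le_reg_r with (/ (A + 1)). apply Rinv_0_lt_compat; lra.
    replace ((A + 1) * Rpower e c1 * / (A + 1)) with (Rpower e c1) by (field; lra). left. exact Hd1'. }
  assert (B * Rpower e c2 < eps / 2).
  { apply Rle_lt_trans with ((B + 1) * Rpower e c2). nra.
    apply Rmult_lt_reg_r with (/ (B + 1)). apply Rinv_0_lt_compat; lra.
    replace ((B + 1) * Rpower e c2 * / (B + 1)) with (Rpower e c2) by (field; lra). exact Hd2'. }
  lra.
Qed.

Lemma bound_frac X Y Y' Z Z' : 0 <= X -> 0 <= Y <= Y' -> 0 < Z' <= Z -> X * Y / Z <= Y' / Z' * X.
Proof.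
  intros HX HY HZ. unfold Rdiv.
  assert (/ Z <= / Z') by (apply Rinv_le_contravar; lra).
  assert (0 < / Z) by (apply Rinv_0_lt_compat; lra).
  assert (Y * / Z <= Y' * / Z') by (apply Rmult_le_compat; lra).
  replace (X * Y * / Z) with (X * (Y * / Z)) by ring. rewrite (Rmult_comm (Y' * / Z')).
  apply Rmult_le_compat_l; auto.
Qed.

Lemma Rabs_frac X Y Z : 0 <= X -> 0 < Z -> Rabs (X * Y / Z) = X * Rabs Y / Z.
Proof.
  intros HX HZ. unfold Rdiv. rewrite !Rabs_mult, Rabs_inv, (Rabs_pos_eq X), (Rabs_pos_eq Z); lra.
Qed.

Lemma rp_add x a b c : 0 < x -> a = b + c -> Rpower x a = Rpower x b * Rpower x c.
Proof. intros Hx ->. apply Rpower_plus. Qed.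
Lemma rp_p1 x a b : 0 < x -> a = b + 1 -> Rpower x a = Rpower x b * x.
Proof. intros Hx ->. rewrite Rpower_plus, Rpower_1; auto. Qed.
Lemma rp_m1 x a b : 0 < x -> a = b - 1 -> Rpower x a = Rpower x b / x.
Proof. intros Hx ->. unfold Rminus. rewrite Rpower_plus, Rpower_Ropp, Rpower_1; auto. Qed.

Lemma RInt_lin4 (f1 f2 f3 f4 : R -> R) k1 k2 k3 k4 a b :
  ex_RInt f1 a b -> ex_RInt f2 a b -> ex_RInt f3 a b -> ex_RInt f4 a b ->
  RInt (fun x => k1 * f1 x + k2 * f2 x + k3 * f3 x + k4 * f4 x) a b =
  k1 * RInt f1 a b + k2 * RInt f2 a b + k3 * RInt f3 a b + k4 * RInt f4 a b.
Proof.
  intros E1 E2 E3 E4. apply is_RInt_unique.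
  apply (is_RInt_plus (V:=R_NormedModule) (fun x => k1 * f1 x + k2 * f2 x + k3 * f3 x) (fun x => k4 * f4 x)).
  apply (is_RInt_plus (V:=R_NormedModule) (fun x => k1 * f1 x + k2 * f2 x) (fun x => k3 * f3 x)).
  apply (is_RInt_plus (V:=R_NormedModule) (fun x => k1 * f1 x) (fun x => k2 * f2 x)).
  all: apply (is_RInt_scal (V:=R_NormedModule)); apply (RInt_correct (V:=R_CompleteNormedModule)); auto.
Qed.

Theorem proposition8p1
  (N : nat) (R0 m p gamma alpha beta c1 c2 sigma : R)
  (a da g dg v dv : R -> R)
  (HN : (1 <= N)%nat) (HR : 0 < R0) (Hm : 1 < m) (HNm : m < INR N) (Hp : 1 < p)
  (Hgamma : 0 < gamma < m - 1)
  (Hal : 0 < INR N + alpha - m) (Hbe : 0 < beta - alpha + 1)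
  (Hc : 0 < c1 <= c2)
  (Ha_bd : forall r, 0 <= r -> c1 <= a r <= c2)
  (Ha_der : forall r, 0 < r -> is_derive a r (da r))
  (Ha_cont : cont_nonneg a) (Hda_cont : cont_nonneg da)
  (Hg_nn : forall s, 0 <= s -> 0 <= g s)
  (Hg_der : forall s, 0 < s -> is_derive g s (dg s))
  (Hg_cont : cont_nonneg g) (Hdg_cont : cont_nonneg dg)
  (Hg_mono : forall s t, 0 <= s <= t -> g s <= g t)
  (Hsol : pos_radial_solution N alpha beta m gamma p a g R0 v dv)
  (Hsigma : - (INR N + alpha - m) < sigma <= m - 1) :
  let D := fun r => a r + g (v r) in
  exists I1 I2 I3 I4 : R,
    int0 (fun r => powr r (INR N + alpha - m + sigma) * powr (Rabs (dv r)) m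
                   / powr (D r) gamma) R0 I1 /\
    int0 (fun r => powr r (INR N + alpha - m + 1 + sigma) * powr (Rabs (dv r)) m
                   * da r / powr (D r) (gamma + 1)) R0 I2 /\
    int0 (fun r => powr r (INR N + alpha - m + 1 + sigma) * powr (Rabs (dv r)) m
                   * dv r * dg (v r) / powr (D r) (gamma + 1)) R0 I3 /\
    int0 (fun r => powr r (INR N + alpha + sigma - m - 1)
                   * (powr (Rabs (dv r)) (m - 2) * dv r) * v r
                   / powr (D r) gamma) R0 I4 /\
    (sigma - m + 2 - (INR N + alpha - m + 1 + sigma) / m
       + (INR N + beta + 1 + sigma - m) / (p + 1)) * I1
    = (m - 1) / m * (powr R0 (INR N + alpha - m + 1 + sigma) * powr (Rabs (dv R0)) m
                      / powr (a R0 + g 0) gamma)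
      - gamma / m * I2
      - gamma / m * I3
      - (INR N + beta + 1 + sigma - m) / (p + 1) * (sigma - m + 1) * I4.
Proof.
  intros D.
  destruct Hsol as (Hvpos & Hvc & Hvd & Hdvc & Hfl & _ & HvR).
  set (fl := flux N alpha m gamma a g v dv) in *.
  assert (HNb : 0 < INR N + beta) by lra.
  assert (Hk : 0 < INR N + alpha - 1) by lra.
  assert (He2 : 0 < INR N + alpha - m + 1 + sigma) by lra.
  assert (He1 : 0 < INR N + alpha - m + sigma) by lra.
  assert (Hq : 0 < INR N + beta + 1 + sigma - m) by lra.
  assert (Hv0 : forall r, 0 <= r <= R0 -> 0 <= v r).
  { intros r Hr. destruct (Req_dec r R0) as [->|]. rewrite HvR; lra. left; apply Hvpos; lra. }
  assert (HD : forall r, 0 <= r <= R0 -> c1 <= D r).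
  { intros r Hr. unfold D. pose proof (Ha_bd r ltac:(lra)). pose proof (Hg_nn (v r) (Hv0 r Hr)). lra. }
  destruct (cont_on_bound v 0 R0 ltac:(lra) Hvc) as [Vm HVm].
  set (V := Rabs Vm + 1).
  assert (HV : forall r, 0 <= r <= R0 -> v r <= V).
  { intros r Hr. specialize (HVm r Hr). apply Rabs_le_between in HVm. unfold V. pose proof (Rle_abs Vm). lra. }
  assert (HV0 : 0 < V) by (unfold V; pose proof (Rabs_pos Vm); lra).
  destruct (cont_on_bound dv 0 R0 ltac:(lra) Hdvc) as [Bm HBm].
  set (B := Rabs Bm + 1).
  assert (HB : forall r, 0 <= r <= R0 -> Rabs (dv r) <= B).
  { intros r Hr. specialize (HBm r Hr). unfold B. pose proof (Rle_abs Bm). lra. }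
  assert (HB0 : 0 < B) by (unfold B; pose proof (Rabs_pos Bm); lra).
  set (K1 := powr B (m - 1) / Rpower c1 gamma).
  assert (HK1 : 0 <= K1) by (unfold K1; apply Rdiv_le_0_compat; [apply powr_nonneg|apply Rpower_pos]).
  assert (Hfl1 : forall r, 0 < r <= R0 -> Rabs (fl r) <= K1 * Rpower r (INR N + alpha - 1)).
  { intros r Hr. unfold fl, flux. pose proof (HD r ltac:(lra)) as HDr. unfold D in HDr.
    rewrite (powr_pos r) by lra. rewrite (powr_pos (a r + g (v r))) by lra.
    rewrite Rabs_frac by (try apply Rpower_pos; try (left; apply Rpower_pos); lra).
    rewrite Rabs_mult, (Rabs_pos_eq (powr _ _)) by apply powr_nonneg. rewrite phi_abs.
    unfold K1. apply bound_frac. left; apply Rpower_pos. split. apply powr_nonneg.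
    apply powr_mono. split. apply Rabs_pos. apply HB; lra. lra.
    split. apply Rpower_pos. apply Rle_Rpower_l; lra. }
  assert (Hflneg : forall r, 0 < r < R0 -> fl r < 0).
  { apply (neg_of_decr fl (fun r => - (powr r (INR N + beta - 1) * powr (v r) p)) R0 K1 (INR N + alpha - 1)); auto.
    - intros r Hr. rewrite !powr_pos by (try apply Hvpos; lra). pose proof (Rpower_pos r (INR N + beta - 1)).
      pose proof (Rpower_pos (v r) p). nra.
    - intros r Hr; apply Hfl1; lra. }
  set (K := powr V p / (INR N + beta)).
  assert (HK : 0 <= K) by (unfold K; apply Rdiv_le_0_compat; [apply powr_nonneg|lra]).
  assert (Hfl2 : forall r, 0 < r < R0 -> Rabs (fl r) <= K * Rpower r (INR N + beta)).
  { assert (HG : forall r, 0 < r < R0 -> 0 <= fl r + K * Rpower r (INR N + beta)).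
    { apply (nonneg_of_incr (fun x => fl x + K * Rpower x (INR N + beta))
        (fun x => - (powr x (INR N + beta - 1) * powr (v x) p) + K * ((INR N + beta) * Rpower x (INR N + beta) / x))
        R0 K1 (INR N + alpha - 1)); auto.
      - intros r Hr. apply d_plus. apply Hfl; lra. apply d_scal. apply d_rpow_id. lra.
      - intros r Hr. rewrite !powr_pos by (try apply Hvpos; lra).
        replace (K * ((INR N + beta) * Rpower r (INR N + beta) / r)) with (powr V p * Rpower r (INR N + beta - 1)).
        assert (Rpower (v r) p <= powr V p).
        { rewrite <- (powr_pos (v r)) by (apply Hvpos; lra). apply powr_mono. split. apply Hv0; lra. apply HV; lra. lra. }
        pose proof (Rpower_pos r (INR N + beta - 1)). nra.
        unfold K. unfold Rminus. rewrite Rpower_plus, Rpower_Ropp, Rpower_1 by lra. field. split; lra.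
      - intros r Hr. specialize (Hfl1 r ltac:(lra)). apply Rabs_le_between in Hfl1.
        pose proof (Rpower_pos r (INR N + beta)). nra. }
    intros r Hr. specialize (HG r Hr). specialize (Hflneg r Hr). rewrite Rabs_left by lra. lra. }
  assert (HDd : forall r, 0 < r < R0 -> is_derive D r (da r + dg (v r) * dv r)).
  { intros r Hr. unfold D. apply d_plus. apply Ha_der; lra.
    eapply is_derive_eq. apply (is_derive_comp g v). apply Hg_der. apply Hvpos; lra. apply Hvd; lra.
    unfold scal; simpl; unfold mult; simpl. ring. }
  assert (HDp : forall r, 0 <= r <= R0 -> 0 < D r) by (intros r Hr; specialize (HD r Hr); lra).
  assert (Hdvneg : forall r, 0 < r < R0 -> dv r < 0).
  { intros r Hr. specialize (Hflneg r Hr). unfold fl, flux in Hflneg.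
    destruct (Rlt_dec (dv r) 0) as [|Hn]; auto. exfalso.
    assert (0 <= powr r (INR N + alpha - 1) * (powr (Rabs (dv r)) (m - 2) * dv r) / powr (a r + g (v r)) gamma).
    { apply Rdiv_le_0_compat. apply Rmult_le_pos. apply powr_nonneg. apply Rmult_le_pos. apply powr_nonneg. lra.
      rewrite powr_pos. apply Rpower_pos. apply (HDp r). lra. }
    lra. }
  assert (HflE : forall x, 0 < x < R0 -> fl x = - Rpower (- dv x) (m - 1) * Rpower x (INR N + alpha - 1) / Rpower (D x) gamma).
  { intros x Hx. specialize (Hdvneg x Hx). unfold fl, flux. rewrite Rabs_left by auto.
    rewrite !powr_pos by (try apply (HDp x); lra). fold (D x).
    replace (m - 1) with ((m - 2) + 1) by ring. rewrite Rpower_plus, Rpower_1 by lra. field.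
    apply Rgt_not_eq. apply Rpower_pos. }
  set (ddv := fun r => - ((- dv r) / ((m - 1) * Rpower (- dv r) (m - 1))) *
     (Rpower r (INR N + beta - 1) * Rpower (v r) p * Rpower (D r) gamma / Rpower r (INR N + alpha - 1)
      + Rpower (- dv r) (m - 1) * gamma * (da r + dg (v r) * dv r) / D r
      - Rpower (- dv r) (m - 1) * (INR N + alpha - 1) / r)).
  assert (Hddv : forall r, 0 < r < R0 -> is_derive dv r (ddv r)).
  { intros r Hr.
    apply (is_derive_ext_loc (fun x => - Rpower (- fl x * Rpower (D x) gamma / Rpower x (INR N + alpha - 1)) (/ (m - 1)))).
    - apply (loc_intro r _ (Rmin r (R0 - r))). apply Rmin_glb_lt; lra.
      intros t Ht. assert (Ht' : 0 < t < R0).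
      { assert (Rabs (t - r) < r) by (eapply Rlt_le_trans; [exact Ht|apply Rmin_l]).
        assert (Rabs (t - r) < R0 - r) by (eapply Rlt_le_trans; [exact Ht|apply Rmin_r]).
        apply Rabs_def2 in H. apply Rabs_def2 in H0. lra. }
      rewrite (HflE t Ht'). specialize (Hdvneg t Ht').
      replace (- (- Rpower (- dv t) (m - 1) * Rpower t (INR N + alpha - 1) / Rpower (D t) gamma) *
         Rpower (D t) gamma / Rpower t (INR N + alpha - 1)) with (Rpower (- dv t) (m - 1)).
      rewrite Rpower_mult. replace ((m - 1) * / (m - 1)) with 1 by (field; lra). rewrite Rpower_1; lra.
      field. split; apply Rgt_not_eq; apply Rpower_pos.
    - pose proof (Hdvneg r Hr) as Hn. pose proof (HDp r ltac:(lra)) as HDr.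
      assert (HG : - fl r * Rpower (D r) gamma / Rpower r (INR N + alpha - 1) = Rpower (- dv r) (m - 1)).
      { rewrite (HflE r Hr). field. split; apply Rgt_not_eq; apply Rpower_pos. }
      eapply is_derive_eq.
      { apply d_opp. apply (d_rpow (fun x => - fl x * Rpower (D x) gamma / Rpower x (INR N + alpha - 1))).
        cbv beta. rewrite HG. apply Rpower_pos.
        apply d_div. apply d_mult. apply d_opp. apply Hfl. lra. apply (d_rpow D). lra. apply HDd. lra.
        apply d_rpow_id. lra. apply Rgt_not_eq; apply Rpower_pos. }
      cbv beta. rewrite HG. rewrite Rpower_mult. replace ((m - 1) * / (m - 1)) with 1 by (field; lra).
      rewrite Rpower_1 by lra. rewrite (HflE r Hr). unfold ddv.
      rewrite !powr_pos by (try apply Hvpos; lra).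
      assert (0 < Rpower (- dv r) (m - 1)) by apply Rpower_pos.
      assert (0 < Rpower r (INR N + alpha - 1)) by apply Rpower_pos.
      assert (0 < Rpower (D r) gamma) by apply Rpower_pos.
      field. repeat split; lra. }
  set (f1 := fun r => powr r (INR N + alpha - m + sigma) * powr (Rabs (dv r)) m / powr (D r) gamma).
  set (f2 := fun r => powr r (INR N + alpha - m + 1 + sigma) * powr (Rabs (dv r)) m * da r / powr (D r) (gamma + 1)).
  set (f3 := fun r => powr r (INR N + alpha - m + 1 + sigma) * powr (Rabs (dv r)) m * dv r * dg (v r) / powr (D r) (gamma + 1)).
  set (f4 := fun r => powr r (INR N + alpha + sigma - m - 1) * (powr (Rabs (dv r)) (m - 2) * dv r) * v r / powr (D r) gamma).
  set (Cc := sigma - m + 2 - (INR N + alpha - m + 1 + sigma) / m + (INR N + beta + 1 + sigma - m) / (p + 1)).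
  set (h := fun r => Cc * f1 r + gamma / m * f2 r + gamma / m * f3 r
                     + (INR N + beta + 1 + sigma - m) / (p + 1) * (sigma - m + 1) * f4 r).
  set (Q := fun x => (m - 1) / m * (powr x (INR N + alpha - m + 1 + sigma) * powr (Rabs (dv x)) m / powr (D x) gamma)
                     + powr x (INR N + beta + 1 + sigma - m) * powr (v x) (p + 1) / (p + 1)
                     + (INR N + beta + 1 + sigma - m) / (p + 1) * (powr x (sigma - m + 1) * v x * fl x)).
  assert (HQd : forall r, 0 < r < R0 -> is_derive Q r (h r)).
  { intros r Hr.
    apply (is_derive_ext_loc (fun x => (m - 1) / m * (Rpower x (INR N + alpha - m + 1 + sigma) * Rpower (- dv x) m / Rpower (D x) gamma)
                     + Rpower x (INR N + beta + 1 + sigma - m) * Rpower (v x) (p + 1) / (p + 1)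
                     + (INR N + beta + 1 + sigma - m) / (p + 1) * (Rpower x (sigma - m + 1) * v x * fl x))).
    - apply (loc_intro r _ (Rmin r (R0 - r))). apply Rmin_glb_lt; lra.
      intros t Ht. assert (Ht' : 0 < t < R0).
      { assert (Rabs (t - r) < r) by (eapply Rlt_le_trans; [exact Ht|apply Rmin_l]).
        assert (Rabs (t - r) < R0 - r) by (eapply Rlt_le_trans; [exact Ht|apply Rmin_r]).
        apply Rabs_def2 in H. apply Rabs_def2 in H0. lra. }
      unfold Q. rewrite (Rabs_left (dv t)) by (apply Hdvneg; lra).
      assert (0 < v t) by (apply Hvpos; lra). assert (0 < D t) by (apply HDp; lra).
      assert (dv t < 0) by (apply Hdvneg; lra).
      rewrite !powr_pos by lra. reflexivity.
    - pose proof (Hdvneg r Hr) as Hn. pose proof (HDp r ltac:(lra)) as HDr. pose proof (Hvpos r ltac:(lra)) as Hvr.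
      eapply is_derive_eq.
      { apply d_plus. apply d_plus.
        - apply d_scal. apply d_div. apply d_mult. apply d_rpow_id. lra.
          apply (d_rpow (fun x => - dv x)). lra. apply d_opp. apply Hddv. lra.
          apply (d_rpow D). lra. apply HDd. lra. apply Rgt_not_eq; apply Rpower_pos.
        - apply d_div. apply d_mult. apply d_rpow_id. lra. apply (d_rpow v). lra. apply Hvd. lra.
          apply d_const. lra.
        - apply d_scal. apply d_mult. apply d_mult. apply d_rpow_id. lra. apply Hvd. lra. apply Hfl. lra. }
      cbv beta. unfold h, f1, f2, f3, f4, ddv. rewrite (Rabs_left (dv r)) by lra.
      rewrite !powr_pos by lra.
      rewrite (HflE r Hr).
      rewrite (rp_p1 (- dv r) m (m - 1)) by lra.
      rewrite (rp_m1 (- dv r) (m - 2) (m - 1)) by lra.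
      rewrite (rp_p1 (v r) (p + 1) p) by lra.
      rewrite (rp_p1 (D r) (gamma + 1) gamma) by lra.
      rewrite (rp_p1 r (INR N + alpha - m + 1 + sigma) (INR N + alpha - m + sigma)) by lra.
      rewrite (rp_m1 r (INR N + alpha + sigma - m - 1) (INR N + alpha - m + sigma)) by lra.
      rewrite (rp_add r (INR N + alpha - m + sigma) (sigma - m + 1) (INR N + alpha - 1)) by lra.
      rewrite (rp_p1 r (INR N + beta + 1 + sigma - m) (INR N + beta + sigma - m)) by lra.
      rewrite (rp_add r (INR N + beta + sigma - m) (sigma - m + 1) (INR N + beta - 1)) by lra.
      assert (0 < Rpower (- dv r) (m - 1)) by apply Rpower_pos.
      assert (0 < Rpower r (INR N + alpha - 1)) by apply Rpower_pos.
      assert (0 < Rpower r (sigma - m + 1)) by apply Rpower_pos.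
      assert (0 < Rpower (D r) gamma) by apply Rpower_pos.
      unfold Cc. field. repeat split; lra. }
  assert (Ev0 : forall x, within (IN 0 R0) (locally x) (fun y => 0 <= y)).
  { intros x. unfold within. apply filter_forall. unfold IN. intros; lra. }
  assert (Evv : forall x, within (IN 0 R0) (locally x) (fun y => 0 <= v y)).
  { intros x. unfold within. apply filter_forall. unfold IN. intros; apply Hv0; lra. }
  assert (cv : forall x, 0 <= x <= R0 -> filterlim v (within (IN 0 R0) (locally x)) (locally (v x))) by (intros; apply Hvc; auto).
  assert (cdv : forall x, 0 <= x <= R0 -> filterlim dv (within (IN 0 R0) (locally x)) (locally (dv x))) by (intros; apply Hdvc; auto).
  assert (cid : forall x, filterlim (fun y : R => y) (within (IN 0 R0) (locally x)) (locally x)).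
  { intros x. apply (cont_within (fun y => y)). apply continuous_id. }
  assert (ca : forall x, 0 <= x <= R0 -> filterlim a (within (IN 0 R0) (locally x)) (locally (a x))).
  { intros x Hx. exact (lim_within_comp (F := within (IN 0 R0) (locally x)) (fun y => y) a (fun y => 0 <= y) x (Ha_cont x ltac:(lra)) (cid x) (Ev0 x)). }
  assert (cda : forall x, 0 <= x <= R0 -> filterlim da (within (IN 0 R0) (locally x)) (locally (da x))).
  { intros x Hx. exact (lim_within_comp (F := within (IN 0 R0) (locally x)) (fun y => y) da (fun y => 0 <= y) x (Hda_cont x ltac:(lra)) (cid x) (Ev0 x)). }
  assert (cgv : forall x, 0 <= x <= R0 -> filterlim (fun y => g (v y)) (within (IN 0 R0) (locally x)) (locally (g (v x)))).
  { intros x Hx. exact (lim_within_comp (F := within (IN 0 R0) (locally x)) v g (fun y => 0 <= y) (v x) (Hg_cont (v x) (Hv0 x Hx)) (cv x Hx) (Evv x)). }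
  assert (cdgv : forall x, 0 <= x <= R0 -> filterlim (fun y => dg (v y)) (within (IN 0 R0) (locally x)) (locally (dg (v x)))).
  { intros x Hx. exact (lim_within_comp (F := within (IN 0 R0) (locally x)) v dg (fun y => 0 <= y) (v x) (Hdg_cont (v x) (Hv0 x Hx)) (cv x Hx) (Evv x)). }
  assert (cD : forall x, 0 <= x <= R0 -> filterlim D (within (IN 0 R0) (locally x)) (locally (D x))).
  { intros x Hx. unfold D. apply (lim_plus a (fun y => g (v y))); auto. }
  assert (cpD : forall x c, 0 <= x <= R0 -> filterlim (fun y => powr (D y) c) (within (IN 0 R0) (locally x)) (locally (powr (D x) c))).
  { intros x c Hx. apply (lim_cont D (fun y => powr y c)); auto. apply cont_powr_pos. apply HDp; auto. }
  assert (cW : forall x c, 0 < c -> 0 <= x <= R0 -> filterlim (fun y => powr (Rabs (dv y)) c) (within (IN 0 R0) (locally x)) (locally (powr (Rabs (dv x)) c))).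
  { intros x c Hc0 Hx. apply (lim_cont dv (fun y => powr (Rabs y) c)); auto. apply cont_powr_abs; auto. }
  assert (cphi : forall x, 0 <= x <= R0 -> filterlim (fun y => powr (Rabs (dv y)) (m - 2) * dv y) (within (IN 0 R0) (locally x)) (locally (powr (Rabs (dv x)) (m - 2) * dv x))).
  { intros x Hx. apply (lim_cont dv (fun y => powr (Rabs y) (m - 2) * y)); auto. apply cont_phi; auto. }
  assert (cr : forall x c, 0 < c -> filterlim (fun y => powr y c) (within (IN 0 R0) (locally x)) (locally (powr x c))).
  { intros x c Hc0. apply (cont_within (fun y => powr y c)). apply cont_powr; auto. }
  assert (cr' : forall x c, 0 < x -> filterlim (fun y => powr y c) (within (IN 0 R0) (locally x)) (locally (powr x c))).
  { intros x c Hx. apply (cont_within (fun y => powr y c)). apply cont_powr_pos; auto. }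
  assert (nz : forall x c, 0 <= x <= R0 -> powr (D x) c <> 0).
  { intros x c Hx. rewrite powr_pos by (apply HDp; auto). apply Rgt_not_eq, Rpower_pos. }
  assert (cf1 : forall x, 0 <= x <= R0 -> filterlim f1 (within (IN 0 R0) (locally x)) (locally (f1 x))).
  { intros x Hx. unfold f1. apply lim_div; auto. apply lim_mult; auto. apply cW; auto; lra. }
  assert (cf2 : forall x, 0 <= x <= R0 -> filterlim f2 (within (IN 0 R0) (locally x)) (locally (f2 x))).
  { intros x Hx. unfold f2. apply lim_div; auto. apply lim_mult; auto. apply lim_mult; auto. apply cW; auto; lra. }
  assert (cf3 : forall x, 0 <= x <= R0 -> filterlim f3 (within (IN 0 R0) (locally x)) (locally (f3 x))).
  { intros x Hx. unfold f3. apply lim_div; auto. apply (lim_mult _ (fun y => dg (v y))); auto. apply lim_mult; auto.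
    apply lim_mult; auto. apply cW; auto; lra. }
  assert (cf4 : forall x, 0 < x <= R0 -> filterlim f4 (within (IN 0 R0) (locally x)) (locally (f4 x))).
  { intros x Hx. unfold f4. apply lim_div. apply nz; lra. apply lim_mult. apply lim_mult.
    apply cr'; lra. apply cphi; lra. apply cv; lra. apply cpD; lra. }
  assert (ch : forall x, 0 < x <= R0 -> filterlim h (within (IN 0 R0) (locally x)) (locally (h x))).
  { intros x Hx. unfold h. apply lim_plus. apply lim_plus. apply lim_plus.
    all: apply lim_mult; [apply lim_const|]. apply cf1; lra. apply cf2; lra. apply cf3; lra. apply cf4; lra. }
  assert (cfl : forall x, 0 < x <= R0 -> filterlim fl (within (IN 0 R0) (locally x)) (locally (fl x))).
  { intros x Hx. unfold fl, flux. apply lim_div. apply (nz x); lra. apply lim_mult. apply cr'; lra. apply cphi; lra.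
    apply (cpD x gamma); lra. }
  set (QR := (m - 1) / m * (powr R0 (INR N + alpha - m + 1 + sigma) * powr (Rabs (dv R0)) m / powr (a R0 + g 0) gamma)).
  assert (HQR : Q R0 = QR).
  { unfold Q, QR. cbv beta. unfold D. rewrite HvR. rewrite (powr_le0 0) by lra. rewrite !Rmult_0_r, !Rmult_0_l. unfold Rdiv. rewrite Rmult_0_l. lra. }
  assert (cQ : filterlim Q (at_left R0) (locally QR)).
  { rewrite <- HQR. apply (at_left_of_within Q 0 R0 (Q R0) HR). unfold Q.
    assert (HR' : 0 <= R0 <= R0) by lra.
    apply lim_plus. apply lim_plus.
    - apply lim_mult. apply lim_const. apply lim_div. apply nz; lra. apply lim_mult. apply cr'; lra. apply cW; lra. apply cpD; lra.
    - apply lim_div; [lra|..]; try apply lim_const. apply lim_mult. apply cr'; lra.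
      apply (lim_cont v (fun y => powr y (p + 1))). apply cont_powr; lra. apply cv; lra.
    - apply lim_mult. apply lim_const. apply lim_mult. apply lim_mult. apply cr'; lra. apply cv; lra. apply cfl; lra. }
  assert (co1 : cont_on f1 0 R0) by (intros x Hx; exact (cf1 x Hx)).
  assert (co2 : cont_on f2 0 R0) by (intros x Hx; exact (cf2 x Hx)).
  assert (co3 : cont_on f3 0 R0) by (intros x Hx; exact (cf3 x Hx)).
  assert (co4 : forall e, 0 < e <= R0 -> cont_on f4 e R0).
  { intros e He x Hx. apply (within_sub f4 0 R0 e R0); try lra. apply cf4; lra. }
  assert (coh : forall e, 0 < e <= R0 -> cont_on h e R0).
  { intros e He x Hx. apply (within_sub h 0 R0 e R0); try lra. apply ch; lra. }
  assert (Hex4 : forall e, 0 < e <= R0 -> ex_RInt f4 e R0).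
  { intros e He. apply (cont_on_exRInt f4 e R0); try lra. apply co4; lra. }
  assert (Hf4b : forall r, 0 < r < R0 -> Rabs (f4 r) <= V * K * Rpower r (INR N + beta + sigma - m)).
  { intros r Hr. pose proof (HDp r ltac:(lra)) as HDr.
    assert (E : f4 r = Rpower r (sigma - m) * v r * fl r).
    { unfold f4, fl, flux. unfold D in *. cbv beta in *.
      rewrite !powr_pos by lra.
      rewrite (rp_add r (INR N + alpha + sigma - m - 1) (sigma - m) (INR N + alpha - 1)) by lra.
      rewrite (powr_pos r (INR N + alpha - 1)) by lra. unfold Rdiv. ring. }
    rewrite E. rewrite !Rabs_mult. rewrite (Rabs_pos_eq (Rpower _ _)) by (left; apply Rpower_pos).
    rewrite (Rabs_pos_eq (v r)) by (apply Hv0; lra).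
    rewrite (rp_add r (INR N + beta + sigma - m) (sigma - m) (INR N + beta)) by lra.
    pose proof (Rpower_pos r (sigma - m)). pose proof (Rpower_pos r (INR N + beta)).
    specialize (Hfl2 r Hr). pose proof (HV r ltac:(lra)). pose proof (Hv0 r ltac:(lra)).
    pose proof (Rabs_pos (fl r)).
    assert (v r * Rabs (fl r) <= V * (K * Rpower r (INR N + beta))) by (apply Rmult_le_compat; lra).
    nra. }
  destruct (improper f4 R0 (INR N + beta + sigma - m) (V * K) HR ltac:(lra) ltac:(nra) Hex4 Hf4b) as [I4 HI4].
  pose proof (int0_of_cont f1 R0 HR co1) as HI1.
  pose proof (int0_of_cont f2 R0 HR co2) as HI2.
  pose proof (int0_of_cont f3 R0 HR co3) as HI3.
  set (A := (m - 1) / m * (powr B m / Rpower c1 gamma)).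
  set (B2 := powr V (p + 1) / (p + 1) + (INR N + beta + 1 + sigma - m) / (p + 1) * V * K).
  assert (HQb : forall e, 0 < e < R0 -> Rabs (Q e) <=
            A * Rpower e (INR N + alpha - m + 1 + sigma) + B2 * Rpower e (INR N + beta + 1 + sigma - m)).
  { intros e He. unfold Q. cbv beta. pose proof (HDp e ltac:(lra)) as HDe. pose proof (HD e ltac:(lra)) as HDe'.
    rewrite !(powr_pos e) by lra.
    assert (U1 : 0 <= Rpower e (INR N + alpha - m + 1 + sigma) * powr (Rabs (dv e)) m / powr (D e) gamma).
    { apply Rdiv_le_0_compat. apply Rmult_le_pos. left; apply Rpower_pos. apply powr_nonneg.
      rewrite powr_pos by lra. apply Rpower_pos. }
    assert (U2 : Rpower e (INR N + alpha - m + 1 + sigma) * powr (Rabs (dv e)) m / powr (D e) gamma <=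
                 powr B m / Rpower c1 gamma * Rpower e (INR N + alpha - m + 1 + sigma)).
    { apply bound_frac. left; apply Rpower_pos. split. apply powr_nonneg. apply powr_mono.
      split. apply Rabs_pos. apply HB; lra. lra. split. apply Rpower_pos. rewrite powr_pos by lra.
      apply Rle_Rpower_l; lra. }
    assert (Y1 : 0 <= Rpower e (INR N + beta + 1 + sigma - m) * powr (v e) (p + 1) / (p + 1)).
    { apply Rdiv_le_0_compat. apply Rmult_le_pos. left; apply Rpower_pos. apply powr_nonneg. lra. }
    assert (Y2 : Rpower e (INR N + beta + 1 + sigma - m) * powr (v e) (p + 1) / (p + 1) <=
                 powr V (p + 1) / (p + 1) * Rpower e (INR N + beta + 1 + sigma - m)).
    { apply bound_frac. left; apply Rpower_pos. split. apply powr_nonneg. apply powr_mono.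
      split. apply Hv0; lra. apply HV; lra. lra. lra. }
    assert (Z2 : Rabs ((INR N + beta + 1 + sigma - m) / (p + 1) * (Rpower e (sigma - m + 1) * v e * fl e)) <=
                 (INR N + beta + 1 + sigma - m) / (p + 1) * V * K * Rpower e (INR N + beta + 1 + sigma - m)).
    { rewrite !Rabs_mult. rewrite (Rabs_pos_eq ((INR N + beta + 1 + sigma - m) / (p + 1))) by (apply Rdiv_le_0_compat; lra).
      rewrite (Rabs_pos_eq (Rpower _ _)) by (left; apply Rpower_pos).
      rewrite (Rabs_pos_eq (v e)) by (apply Hv0; lra).
      rewrite (rp_add e (INR N + beta + 1 + sigma - m) (sigma - m + 1) (INR N + beta)) by lra.
      pose proof (Rpower_pos e (sigma - m + 1)). pose proof (Rpower_pos e (INR N + beta)).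
      specialize (Hfl2 e He). pose proof (HV e ltac:(lra)). pose proof (Hv0 e ltac:(lra)).
      pose proof (Rabs_pos (fl e)).
      assert (v e * Rabs (fl e) <= V * (K * Rpower e (INR N + beta))) by (apply Rmult_le_compat; lra).
      assert (0 <= (INR N + beta + 1 + sigma - m) / (p + 1)) by (apply Rdiv_le_0_compat; lra).
      assert (Rpower e (sigma - m + 1) * (v e * Rabs (fl e)) <= Rpower e (sigma - m + 1) * (V * (K * Rpower e (INR N + beta))))
        by (apply Rmult_le_compat_l; lra).
      nra. }
    assert (0 <= (m - 1) / m) by (apply Rdiv_le_0_compat; lra).
    eapply Rle_trans. apply Rabs_triang. eapply Rle_trans. apply Rplus_le_compat_r. apply Rabs_triang.
    rewrite (Rabs_pos_eq ((m - 1) / m * _)) by (apply Rmult_le_pos; lra).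
    rewrite (Rabs_pos_eq (_ / (p + 1))) by lra.
    unfold A, B2.
    assert ((m - 1) / m * (Rpower e (INR N + alpha - m + 1 + sigma) * powr (Rabs (dv e)) m / powr (D e) gamma) <=
            (m - 1) / m * (powr B m / Rpower c1 gamma * Rpower e (INR N + alpha - m + 1 + sigma))) by (apply Rmult_le_compat_l; lra).
    nra. }
  assert (HQ0 : filterlim Q (at_right 0) (locally 0)).
  { apply (lim_zero_of_bound Q R0 A B2 (INR N + alpha - m + 1 + sigma) (INR N + beta + 1 + sigma - m)); auto.
    unfold A. apply Rmult_le_pos. apply Rdiv_le_0_compat; lra. apply Rdiv_le_0_compat. apply powr_nonneg. apply Rpower_pos.
    unfold B2. apply Rplus_le_le_0_compat. apply Rdiv_le_0_compat. apply powr_nonneg. lra.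
    apply Rmult_le_pos. apply Rmult_le_pos. apply Rdiv_le_0_compat; lra. lra. auto. }
  assert (HF : forall e, 0 < e < R0 -> RInt h e R0 = QR - Q e).
  { intros e He. destruct (cont_on_bound h e R0 ltac:(lra) (coh e ltac:(lra))) as [M HM].
    apply (FTC_right Q h e R0 QR M); auto; try lra.
    - intros x Hx. apply HQd. lra.
    - intros x Hx. apply (within_interior h 0 R0 x (h x)). lra. apply ch; lra.
    - apply (cont_on_exRInt h e R0); try lra. apply coh; lra. }
  assert (HLin : forall e, 0 < e < R0 -> RInt h e R0 =
      Cc * RInt f1 e R0 + gamma / m * RInt f2 e R0 + gamma / m * RInt f3 e R0
      + (INR N + beta + 1 + sigma - m) / (p + 1) * (sigma - m + 1) * RInt f4 e R0).
  { intros e He. unfold h. apply RInt_lin4.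
    apply (cont_on_exRInt f1 0 R0); auto; lra.
    apply (cont_on_exRInt f2 0 R0); auto; lra.
    apply (cont_on_exRInt f3 0 R0); auto; lra.
    apply Hex4; lra. }
  assert (L1 : filterlim (fun e => Cc * RInt f1 e R0 + gamma / m * RInt f2 e R0 + gamma / m * RInt f3 e R0
      + (INR N + beta + 1 + sigma - m) / (p + 1) * (sigma - m + 1) * RInt f4 e R0) (at_right 0)
      (locally (Cc * RInt f1 0 R0 + gamma / m * RInt f2 0 R0 + gamma / m * RInt f3 0 R0
      + (INR N + beta + 1 + sigma - m) / (p + 1) * (sigma - m + 1) * I4))).
  { apply lim_plus. apply lim_plus. apply lim_plus.
    all: apply lim_mult; [apply lim_const|].
    exact (proj2 HI1). exact (proj2 HI2). exact (proj2 HI3). exact (proj2 HI4). }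
  assert (L2 : filterlim (fun e => Cc * RInt f1 e R0 + gamma / m * RInt f2 e R0 + gamma / m * RInt f3 e R0
      + (INR N + beta + 1 + sigma - m) / (p + 1) * (sigma - m + 1) * RInt f4 e R0) (at_right 0)
      (locally (QR + - 0))).
  { apply (filterlim_ext_loc (fun e => QR + - Q e)).
    - exists (mkposreal R0 HR). intros y Hy Hy0. apply (proj1 (ballR _ _ _)) in Hy. simpl in Hy.
      rewrite Rminus_0_r in Hy. apply Rabs_def2 in Hy.
      rewrite <- HLin by lra. rewrite HF by lra. ring.
    - apply lim_plus. apply lim_const. apply lim_opp. exact HQ0. }
  pose proof (filterlim_locally_unique _ _ _ L1 L2) as Eq.
  exists (RInt f1 0 R0), (RInt f2 0 R0), (RInt f3 0 R0), I4.
  split. exact HI1. split. exact HI2. split. exact HI3. split. exact HI4.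
  lra.
Qed.
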